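(* Let $(G,x,y)$ be an $n$-isobicyclic triple, written as a semidirect product $G=T\rtimes S$, $x=x_Sx_T$, $y=y_Sy_T$ of the standard $t$-isobicyclic triple $(T,x_T,y_T)$ by an $s$-isobicyclic triple $(S,x_S,y_S)$ via a diagonal action with eigenvalue $\lambda$ as in Theorem 4.1, where the decomposition is canonical, i.e. $T\cap Z(G)=1$. Then the order of $xy$ in $G$ equals the order of $x_Sy_S$ in $S$.
   Context: $(G,x,y)$ is $n$-isobicyclic if $\langle x\rangle,\langle y\rangle$ are cyclic of order $n$, $G=\langle x\rangle\langle y\rangle$, $\langle x\rangle\cap\langle y\rangle=1$, and some automorphism transposes $x,y$. The standard $t$-triple is $(C_t\times C_t,x_T,y_T)$ with $x_T,y_T$ a basis. The semidirect product with eigenvalue $\lambda\in\mathbb Z_t^*$ ($\gcd(s,t)=1$): $x_S$ acts by conjugation fixing $x_T$ and sending $y_T\mapsto y_T^\lambda$, $y_S$ sends $x_T\mapsto x_T^\lambda$ and fixes $y_T$. Every $n$-isobicyclic triple has such a decomposition with $S$ a cartesian (direct) product of prime-power isobicyclic triples, and there is a unique one with $t$ minimal, characterised by $T\cap Z(G)=1$ ($Z(G)$ the centre). *)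

(* Defs.v *)
From HB Require Import structures.
From mathcomp Require Import all_boot all_fingroup all_solvable.
Set Implicit Arguments. Unset Strict Implicit. Unset Printing Implicit Defensive.
Local Open Scope group_scope.

Definition isobicyclic (gT : finGroupType) (G : {group gT}) (x y : gT)
    (n : nat) : Prop :=
  [/\ #[x] = n, #[y] = n, <[x]> * <[y]> = G, <[x]> :&: <[y]> = 1
    & exists a : {perm gT}, [/\ a \in Aut G, a x = y & a y = x]].

Definition standard_triple (gT : finGroupType) (T : {group gT}) (xT yT : gT)
    (t : nat) : Prop :=
  [/\ #[xT] = t, #[yT] = t & <[xT]> \x <[yT]> = T].

(* Main.v *)
Require Import Defs.
From HB Require Import structures.
From mathcomp Require Import all_boot all_fingroup all_solvable.
Local Open Scope group_scope.

Lemma conj_pow_iter (gT : finGroupType) (u z : gT) lam k :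
  z ^ u = z ^+ lam -> z ^ (u ^+ k) = z ^+ (lam ^ k).
Proof.
move=> H; elim: k => [|k IH]; first by rewrite expg0 conjg1 expn0 expg1.
by rewrite expgSr conjgM IH conjXg H -expgM -expnS.
Qed.

Fixpoint gs (lam k : nat) : nat := if k is k'.+1 then gs lam k' * lam + 1 else 0.

Lemma gs_geom lam k : gs lam k * lam + 1 = gs lam k + lam ^ k.
Proof.
elim: k => [|k IH] /=; first by rewrite mul0n expn0.
rewrite {1}IH mulnDl expnS [(lam * _)%N]mulnC.
by rewrite addnAC.
Qed.

Theorem lemma9p1 (gT : finGroupType) (G T S : {group gT})
    (x y xT yT xS yS : gT) (n t s lam : nat) :
  isobicyclic G x y n ->
  standard_triple T xT yT t ->
  isobicyclic S xS yS s ->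
  T ><| S = G ->
  x = xS * xT -> y = yS * yT ->
  coprime lam t ->
  xT ^ xS = xT -> yT ^ xS = yT ^+ lam ->
  xT ^ yS = xT ^+ lam -> yT ^ yS = yT ->
  T :&: 'Z(G) = 1 ->
  #[x * y] = #[xS * yS].
Proof.
move=> hG hT hS; move: hS hT => [] _ _ dS _ _ [] _ _ dT.
move: hG => _.
move=> sdG -> -> _ cxx cyx cxy cyy ZT.
have [_ defG _ tiTS] := sdprodP sdG.
have [_ defT cTT _] := dprodP dT.
have xTT : xT \in T by rewrite -defT; apply/mulsgP; exists xT 1; rewrite ?cycle_id ?group1 ?mulg1 ?mul1g.
have yTT : yT \in T by rewrite -defT; apply/mulsgP; exists 1 yT; rewrite ?cycle_id ?group1 ?mulg1 ?mul1g.
have xSS : xS \in S by rewrite -dS; apply/mulsgP; exists xS 1; rewrite ?cycle_id ?group1 ?mulg1 ?mul1g.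
have ySS : yS \in S by rewrite -dS; apply/mulsgP; exists 1 yS; rewrite ?cycle_id ?group1 ?mulg1 ?mul1g.
have cxy_T : commute yT xT.
  by have /centP := subsetP cTT yT (cycle_id _); apply; apply: cycle_id.
set u := xS * yS.
have uS : u \in S by rewrite groupM.
have cxT : xT ^ u = xT ^+ lam by rewrite conjgM cxx cxy.
have cyT : yT ^ u = yT ^+ lam by rewrite conjgM cyx conjXg cyy.
set w := xT ^+ lam * yT.
have wE : w = xT ^+ lam * yT by [].
have wT : w \in T by rewrite groupM ?groupX.
have cw : w ^ u = w ^+ lam.
  rewrite conjMg conjXg cxT cyT expgMn; last first.
    by apply: commute_sym; apply: commuteX.
  by rewrite -!expgM.
have xyE : xS * xT * (yS * yT) = u * w.
  by rewrite /u /w -cxy conjgE !mulgA mulgK.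
rewrite xyE; clearbody u w.
have key : forall k, (u * w) ^+ k = u ^+ k * w ^+ (gs lam k).
  elim=> [|k IH] /=; first by rewrite !expg0 mulg1.
  rewrite expgSr IH expgSr -!mulgA; congr (_ * _).
  rewrite mulgA (conjgC (w ^+ _) u) -mulgA conjXg cw -expgM addn1 expgSr mulnC.
  done.
set m := #[u].
have um : u ^+ m = 1 by rewrite expg_order.
have fixp : forall z, z \in T -> T \subset 'C[z] ->
   (z ^ xS = z \/ z ^ xS = z ^+ lam) -> (z ^ yS = z \/ z ^ yS = z ^+ lam) ->
   z ^ u = z ^+ lam -> z ^+ gs lam m = 1.
  move=> z zT sTC hx hy hu.
  have hl : z ^+ (lam ^ m) = z by rewrite -(@conj_pow_iter _ u z lam m hu) um conjg1.
  set p := z ^+ gs lam m.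
  have plam : p ^+ lam = p.
    apply: (mulIg z).
    by rewrite /p -expgM -expgSr -addn1 gs_geom expgD hl.
  have pfix : forall g, (z ^ g = z \/ z ^ g = z ^+ lam) -> commute p g.
    move=> g hg; rewrite /commute conjgC /p conjXg.
    case: hg => ->; first done.
    by rewrite -expgM mulnC expgM -/p plam.
  have cpT : forall a, a \in T -> commute p a.
    move=> a aT; apply: commute_sym; apply: commuteX.
    by apply/cent1P; apply: (subsetP sTC).
  have pZ : p \in T :&: 'Z(G).
    rewrite inE groupX //=; apply/centerP; split.
      by rewrite -defG -[p]mulg1 mem_mulg ?group1 // groupX.
    move=> g; rewrite -defG => /mulsgP [a b aT bS ->].
    apply: commuteM; first exact: cpT.
    move: bS; rewrite -dS => /mulsgP [c d /cycleP [i ->] /cycleP [j ->] ->].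
    by apply: commuteM; apply: commuteX; apply: pfix.
  by move: pZ; rewrite ZT inE => /eqP.
have hxT : xT ^+ gs lam m = 1.
  apply: fixp => //; last by right.
    rewrite -defT mul_subG // cycle_subG; first exact: cent1id.
    by apply/cent1P.
  by left.
have hyT : yT ^+ gs lam m = 1.
  apply: fixp => //; last by left.
    rewrite -defT mul_subG // cycle_subG; last exact: cent1id.
    by apply/cent1P; apply: commute_sym.
  by right.
apply/eqP; rewrite eqn_dvd; apply/andP; split.
  rewrite order_dvdn key um mul1g wE expgMn; last first.
    by apply: commute_sym; apply: commuteX.
  by rewrite -expgM mulnC expgM hxT hyT expg1n mulg1.
rewrite order_dvdn.
have := expg_order (u * w); rewrite key => H.
have E : u ^+ #[u * w] = (w ^+ gs lam #[u * w])^-1.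
  by rewrite -[u ^+ _]mulg1 -(mulgV (w ^+ gs lam #[u * w])) mulgA H mul1g.
have : u ^+ #[u * w] \in T :&: S.
  by rewrite inE (groupX _ uS) andbT E groupV groupX.
by rewrite tiTS inE.
Qed.
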